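(* Color each positive integer $\ell$ as follows: write $\ell=\sum_i b_i 11^i$ with digits $0\le b_i\le 10$, let $j$ be the smallest index with $b_j\neq 0$, and color $\ell$ white if $b_j\in\{1,3,4,5,9\}$ and black if $b_j\in\{2,6,7,8,10\}$. Then there is a constant $C$ such that for every $n$, the number $N$ of monochromatic $4$-APs in $[n]$ under this coloring satisfies $\left|N-\frac{1}{72}n^2\right|\le Cn$.
   Context: A $4$-AP in $[n]=\{1,\ldots,n\}$ is a sequence $a,a+d,a+2d,a+3d$ of elements of $[n]$ with integer $d\ge 1$; it is monochromatic if all four terms have the same color. *)

(* Defs.v *)
From HB Require Import structures.
From mathcomp Require Import all_boot all_order all_algebra.
Set Implicit Arguments. Unset Strict Implicit. Unset Printing Implicit Defensive.

(* Lowest nonzero base-11 digit b_j of l (for l > 0); fuel argument k.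
   With fuel l it is correct for every l > 0, since the 11-adic valuation
   of l is < l. *)
Fixpoint lowdigit11_aux (k l : nat) : nat :=
  match k with
  | 0 => l %% 11
  | k'.+1 => if l %% 11 == 0 then lowdigit11_aux k' (l %/ 11) else l %% 11
  end.

Definition lowdigit11 (l : nat) : nat := lowdigit11_aux l l.

Definition white (l : nat) : bool := lowdigit11 l \in [:: 1; 3; 4; 5; 9].

Definition mono4 (a d : nat) : bool :=
  [&& white (a + d) == white a, white (a + 2 * d) == white a
    & white (a + 3 * d) == white a].

Definition N4 (n : nat) : nat :=
  \sum_(1 <= a < n.+1) \sum_(1 <= d < n.+1) ((a + 3 * d <= n) && mono4 a d).

(* Main.v *)
Require Import Defs.
From HB Require Import structures.
From mathcomp Require Import all_boot all_order all_algebra.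
From mathcomp Require Import zify ring lra.
Import Order.TTheory GRing.Theory Num.Theory.

Lemma aux_fuel k k' l : 0 < l -> l <= k -> l <= k' ->
  lowdigit11_aux k l = lowdigit11_aux k' l.
Proof.
elim: k k' l => [|k IH] [|k'] l // l0 lk lk'; try lia.
rewrite /=; case: eqP => // Hm.
have q0 : 0 < l %/ 11.
  rewrite divn_gt0 //. move/eqP: Hm; rewrite -/(11 %| l) => /dvdnP [c Hc]. lia.
have ql : l %/ 11 < l by rewrite ltn_Pdiv.
apply: IH => //; lia.
Qed.

Lemma ld_mod l : l %% 11 != 0 -> lowdigit11 l = l %% 11.
Proof.
move=> H; rewrite /lowdigit11; case: l H => [|l] //= H.
by rewrite (negbTE H).
Qed.

Lemma ld_mul l : 0 < l -> lowdigit11 (11 * l) = lowdigit11 l.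
Proof.
move=> l0; rewrite /lowdigit11; case E: (11 * l) => [|m]; first lia.
rewrite /= -E modnMr /= mulKn //.
apply: aux_fuel => //; lia.
Qed.

Lemma white_mul l : 0 < l -> white (11 * l) = white l.
Proof. by move=> l0; rewrite /white ld_mul. Qed.

Definition QR (x : nat) : bool := x \in [:: 1; 3; 4; 5; 9].

Lemma white_mod l : l %% 11 != 0 -> white l = QR (l %% 11).
Proof. by move=> H; rewrite /white ld_mod. Qed.

Definition goodrs (r s : nat) : bool :=
  has (fun i => has (fun j =>
     [&& (r + i * s) %% 11 != 0, (r + j * s) %% 11 != 0 &
       QR ((r + i * s) %% 11) != QR ((r + j * s) %% 11)]) (iota 0 4)) (iota 0 4).

Lemma comb_all : all (fun r => all (fun s => goodrs r s) (iota 1 10)) (iota 0 11).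
Proof. by vm_compute. Qed.

Lemma mono4_all a d : mono4 a d -> forall i, i < 4 -> white (a + i * d) = white a.
Proof.
case/and3P => /eqP H1 /eqP H2 /eqP H3 [|[|[|[|i]]]] // _.
- by rewrite mul0n addn0.
- by rewrite mul1n.
Qed.

Lemma mono4E a d : mono4 a d =
  [&& white (a + 1 * d) == white (a + 0 * d), white (a + 2 * d) == white (a + 0 * d)
    & white (a + 3 * d) == white (a + 0 * d)].
Proof. by rewrite mul1n mul0n addn0. Qed.

Lemma key a d : 0 < a -> 0 < d ->
  mono4 a d = if 11 %| d then (if 11 %| a then mono4 (a %/ 11) (d %/ 11) else true)
              else false.
Proof.
move=> a0 d0.
case: (boolP (11 %| d)) => Hd.
  case: (boolP (11 %| a)) => Ha.
    move/dvdnP: Ha => [a' Ea]; move/dvdnP: Hd => [d' Ed]; subst a d.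
    rewrite !mulnK //.
    have a'0 : 0 < a' by lia.
    have d'0 : 0 < d' by lia.
    idtac.
    have W i : white (a' * 11 + i * (d' * 11)) = white (a' + i * d').
      have -> : a' * 11 + i * (d' * 11) = 11 * (a' + i * d') by lia.
      by rewrite white_mul //; lia.
    by rewrite !mono4E !W.
  have R i : (a + i * d) %% 11 = a %% 11.
    by rewrite -modnDm -modnMmr (eqP Hd) muln0 mod0n addn0 modn_mod.
  have E i : white (a + i * d) = QR (a %% 11) by rewrite white_mod R.
  by rewrite mono4E !E !eqxx.
apply/negP => /mono4_all M.
have r11 : a %% 11 < 11 by rewrite ltn_mod.
have s11 : 0 < d %% 11 < 11 by rewrite ltn_mod lt0n Hd.
have : goodrs (a %% 11) (d %% 11).
  move/allP: comb_all => /(_ (a %% 11)); rewrite mem_iota => /(_ r11) /allP; apply.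
  rewrite mem_iota; lia.
case/hasP => i; rewrite mem_iota => /andP [_ i4] /hasP [j]; rewrite mem_iota => /andP [_ j4].
case/and3P => Hi Hj.
have W k : (a %% 11 + k * (d %% 11)) %% 11 = (a + k * d) %% 11.
  by rewrite -modnDm -[RHS]modnDm modn_mod modnMmr.
rewrite !W in Hi Hj * => Hne.
rewrite -(white_mod _ Hi) -(white_mod _ Hj) (M i) // (M j) // in Hne.
by rewrite eqxx in Hne.
Qed.

Lemma sum_div11 (G : nat -> nat) n :
  \sum_(1 <= a < n.+1) (11 %| a) * G (a %/ 11) = \sum_(1 <= a < (n %/ 11).+1) G a.
Proof.
elim: n => [|n IH]; first by rewrite !big_geq.
rewrite big_nat_recr //= IH (divnS n (d:=11)) //.
case: (boolP (11 %| n.+1)) => H /=.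
  by rewrite add1n mul1n [RHS]big_nat_recr.
by rewrite mul0n addn0 add0n.
Qed.

Lemma cnt m : \sum_(1 <= a < m.+1) ~~ (11 %| a) = m - m %/ 11.
Proof.
elim: m => [|m IH]; first by rewrite big_geq.
rewrite big_nat_recr //= IH divnS //.
have := leq_div m 11.
case: (11 %| m.+1) => /=; lia.
Qed.

Lemma cntk n k : \sum_(1 <= a < n.+1) ((a + k <= n) && ~~ (11 %| a)) = (n - k) - (n - k) %/ 11.
Proof.
rewrite (big_cat_nat (n := (n - k).+1)) //=; last by lia.
rewrite -cnt [X in _ + X = _]big1_seq ?addn0; last first.
  by move=> i /andP [_]; rewrite mem_index_iota => Hi; have -> : (i + k <= n) = false by lia.
apply: eq_big_nat => i /andP [Hi1 Hi2]; have -> : (i + k <= n) = true by lia.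
by [].
Qed.

Lemma sumS n E : 33 * E <= n ->
  2 * \sum_(1 <= e < E.+1) (n - 33 * e) + 33 * E * (E + 1) = 2 * n * E.
Proof.
elim: E => [|E IH] H; first by rewrite big_geq // !muln0.
rewrite big_nat_recr //= mulnDr.
have : 33 * E <= n by lia.
move=> /IH; nia.
Qed.

Definition A (n : nat) := \sum_(1 <= e < (n %/ 11).+1) ((n - 33 * e) - (n - 33 * e) %/ 11).

Lemma pointwise n a d : 0 < a -> 0 < d -> 11 %| d ->
  ((a + 3 * d <= n) && mono4 a d) =
  ((a + 33 * (d %/ 11) <= n) && ~~ (11 %| a)) +
  (11 %| a) * ((a %/ 11 + 3 * (d %/ 11) <= n %/ 11) && mono4 (a %/ 11) (d %/ 11)) :> nat.
Proof.
move=> a0 d0 Hd; rewrite key // Hd.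
move/dvdnP: Hd => [e ->]; rewrite mulnK //.
case: (boolP (11 %| a)) => Ha /=.
  move/dvdnP: Ha => [a' ->]; rewrite mulnK // andbF /= add0n mul1n.
  rewrite leq_divRL //.
  by have -> : a' * 11 + 3 * (e * 11) = (a' + 3 * e) * 11 by lia.
rewrite andbT mul0n addn0.
have -> : 3 * (e * 11) = 33 * e by lia.
by rewrite andbT.
Qed.

Lemma rec n : N4 n = N4 (n %/ 11) + A n.
Proof.
rewrite /N4 exchange_big /=.
pose Y e := \sum_(1 <= a < (n %/ 11).+1) ((a + 3 * e <= n %/ 11) && mono4 a e).
pose X e := \sum_(1 <= a < n.+1) ((a + 33 * e <= n) && ~~ (11 %| a)).
transitivity (\sum_(1 <= d < n.+1) (11 %| d) * (X (d %/ 11) + Y (d %/ 11))).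
  apply: eq_big_nat => d /andP [d1 _].
  case: (boolP (11 %| d)) => Hd; last first.
    rewrite mul0n big1_seq // => a /andP [_]; rewrite mem_index_iota => /andP [a1 _].
    by rewrite key // (negbTE Hd) andbF.
  rewrite mul1n /X /Y -sum_div11 -big_split /=.
  apply: eq_big_nat => a /andP [a1 _].
  exact: pointwise.
rewrite (sum_div11 (fun e => X e + Y e)) big_split /= addnC; congr (_ + _).
  by rewrite /Y /N4 exchange_big.
rewrite /A; apply: eq_big_nat => e _; exact: cntk.
Qed.

Lemma Abounds n : 363 * A n <= 5 * n ^ 2 + 30 * n /\ 5 * n ^ 2 <= 363 * A n + 325 * n.
Proof.
set q := n %/ 11.
set S := \sum_(1 <= e < q.+1) (n - 33 * e).
have H1 : 10 * S <= 11 * A n.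
  rewrite /A /S !big_distrr /=; apply: leq_sum => e _.
  have := leq_divM (n - 33 * e) 11; lia.
have H2 : 11 * A n <= 10 * S + 10 * q.
  have -> : 10 * q = \sum_(1 <= e < q.+1) 10 by rewrite sum_nat_const_nat; lia.
  rewrite /A /S !big_distrr /= -big_split /=; apply: leq_sum => e _.
  have := divn_eq (n - 33 * e) 11; have := ltn_pmod (n - 33 * e) (isT : 0 < 11); lia.
set E := n %/ 33.
have Eq : E <= q by apply: leq_div2l.
have HS : S = \sum_(1 <= e < E.+1) (n - 33 * e).
  rewrite /S (big_cat_nat (n := E.+1)) //= [X in _ + X]big1_seq ?addn0 //.
  move=> e /andP [_]; rewrite mem_index_iota => /andP [He _].
  have := ltn_ceil n (isT : 0 < 33); rewrite -/E => H.
  apply/eqP; rewrite subn_eq0; lia.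
have H3 : 33 * E <= n by have := leq_divM n 33; rewrite -/E; lia.
move: (@sumS n E H3); rewrite -HS => H4.
have := divn_eq n 33; have := ltn_pmod n (isT : 0 < 33); rewrite -/E.
have := leq_divM n 11; rewrite -/q.
move: (n %% 33) => r Hq Hr Hn.
split; nia.
Qed.

Lemma natbound n : 72 * N4 n <= n ^ 2 + 100 * n /\ n ^ 2 <= 72 * N4 n + 100 * n.
Proof.
elim/ltn_ind: n => n IH.
case: n IH => [|n] IH; first by rewrite /N4 big_geq.
have := IH (n.+1 %/ 11) (ltn_Pdiv (isT : 1 < 11) (ltn0Sn n)).
rewrite (rec n.+1); have := Abounds n.+1.
have := divn_eq n.+1 11; have := ltn_pmod n.+1 (isT : 0 < 11).
move: (n.+1 %/ 11) (n.+1 %% 11) (A n.+1) (N4 (n.+1 %/ 11)) => q r a N.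
move: n.+1 => m.
move=> Hr Hm [Ha1 Ha2] [IH1 IH2].
split; nia.
Qed.

Local Open Scope ring_scope.

Theorem mainTheorem6 :
  exists C : rat, forall n : nat,
    `| (N4 n)%:R - (n ^ 2)%:R / 72%:R | <= C * n%:R.
Proof.
exists (100%:R / 72%:R) => n.
have [H1 H2] := natbound n.
have H1q : ((72 * N4 n)%:R <= (n ^ 2 + 100 * n)%:R :> rat) by rewrite ler_nat.
have H2q : ((n ^ 2)%:R <= (72 * N4 n + 100 * n)%:R :> rat) by rewrite ler_nat.
rewrite !natrD !natrM in H1q H2q.
move: H1q H2q; set x := (n ^ 2)%:R; set N := (N4 n)%:R; set m := n%:R => H1q H2q.
rewrite ler_norml; apply/andP; split; lra.
Qed.
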